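(* Let $f\colon\mathbb{R}\to\mathbb{R}$ be a nonnegative Borel-measurable function such that $f(x)=0$ if and only if $x=0$. Define \[ c_f:=\sup\Big\{\frac{af(b)+bf(-a)}{af(b-t)+bf(-a-t)}\colon a\in(0,\infty),\ b\in(0,\infty),\ t\in\mathbb{R}\Big\}\in(0,\infty]. \] Then for every real-valued random variable $X$ with a finite mean $\mathsf{E}X$, \[ \mathsf{E} f(X-\mathsf{E} X)\le c_f\,\mathsf{E} f(X), \] and $c_f$ is the best possible constant factor in this inequality over all random variables $X$ with a finite mean (i.e., for every constant $c<c_f$ there exists a random variable $X$ with finite mean such that $\mathsf{E} f(X-\mathsf{E} X)> c\,\mathsf{E} f(X)$).
   Context: For $a,b>0$ and $t\in\mathbb{R}$ both numerator and denominator of the ratio in the definition of $c_f$ are strictly positive, so $c_f$ is well defined with values in $(0,\infty]$. *)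

(* Defs.v *)
From HB Require Import structures.
From mathcomp Require Import all_boot all_order all_algebra.
From mathcomp Require Import all_classical all_reals all_analysis.
Set Implicit Arguments. Unset Strict Implicit. Unset Printing Implicit Defensive.
Import Order.TTheory GRing.Theory Num.Theory.
Local Open Scope ring_scope.
Local Open Scope classical_set_scope.

Definition cf_ratio {R : realType} (f : R -> R) (a b t : R) : R :=
  (a * f b + b * f (- a)) / (a * f (b - t) + b * f (- a - t)).

Definition c_f {R : realType} (f : R -> R) : \bar R :=
  ereal_sup [set y : \bar R | exists a b t : R,
               (0 < a)%R /\ (0 < b)%R /\ y = (cf_ratio f a b t)%:E].

(* Main.v *)
Require Import Defs.
From HB Require Import structures.
From mathcomp Require Import all_boot all_order all_algebra.
From mathcomp Require Import all_classical all_reals all_analysis.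
Import Order.TTheory GRing.Theory Num.Theory.
Local Open Scope ring_scope.
Local Open Scope classical_set_scope.
Local Open Scope ereal_scope.
From mathcomp Require Import ring lra measurable_realfun.
Set Implicit Arguments.
Import Order.TTheory GRing.Theory Num.Theory.
Local Open Scope ring_scope.
Local Open Scope classical_set_scope.

Lemma fpos {R : realType} {f : R -> R} : (forall x, 0 <= f x) ->
  (forall x, f x = 0 <-> x = 0) -> forall x, x != 0 -> 0 < f x.
Proof.
move=> f0 fz x x0; rewrite lt0r f0 andbT; apply/eqP => /fz /eqP; exact/negP.
Qed.

Lemma denom_pos {R : realType} {f : R -> R} a b t : (forall x, 0 <= f x) ->
  (forall x, f x = 0 <-> x = 0) -> 0 < a -> 0 < b ->
  0 < a * f (b - t) + b * f (- a - t).
Proof.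
move=> f0 fz a0 b0.
have [bt|bt] := eqVneq (b - t) 0.
  have : - a - t != 0 by apply/eqP => h; move/eqP: bt; rewrite subr_eq0 => /eqP ht; lra.
  move=> /(fpos f0 fz) h; have := f0 (b - t); nra.
move: bt => /(fpos f0 fz) h; have := f0 (- a - t); nra.
Qed.

Lemma cf_ge1 {R : realType} {f : R -> R} : (forall x, 0 <= f x) ->
  (forall x, f x = 0 <-> x = 0) -> (1%:E <= c_f f)%E.
Proof.
move=> f0 fz; apply: ereal_sup_ubound; exists 1, 1, 0; split; first by [].
split; first by [].
rewrite /cf_ratio !subr0 !mul1r divff //; apply/lt0r_neq0.
by have := denom_pos 1 1 0 f0 fz ltr01 ltr01; rewrite !subr0 !mul1r.
Qed.

Lemma cf_bound {R : realType} {f : R -> R} (c : R) : (forall x, 0 <= f x) ->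
  (forall x, f x = 0 <-> x = 0) -> c_f f = c%:E -> forall a b m, 0 < a -> 0 < b ->
  a * f b + b * f (- a) <= c * (a * f (b + m) + b * f (- a + m)).
Proof.
move=> f0 fz hc a b m a0 b0.
have : ((cf_ratio f a b (- m))%:E <= c_f f)%E.
  by apply: ereal_sup_ubound; exists a, b, (- m).
rewrite hc lee_fin /cf_ratio !opprK ler_pdivrMr; last first.
  by have := denom_pos a b (- m) f0 fz a0 b0; rewrite !opprK.
by rewrite mulrC.
Qed.
Lemma supline {R : realType} (f : R -> R) (c m : R) : 0 <= c -> (forall x, 0 <= f x) -> f 0 = 0 ->
  (forall a b, 0 < a -> 0 < b ->
     a * f b + b * f (- a) <= c * (a * f (b + m) + b * f (- a + m))) ->
  exists l, forall y, f y <= c * f (y + m) + l * y.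
Proof.
move=> c0 f0 f00 H.
pose g y := f y - c * f (y + m).
have key a b : 0 < a -> 0 < b -> g b / b <= - g (- a) / a.
  move=> a0 b0; have := H a b a0 b0.
  rewrite ler_pdivrMr // mulrAC ler_pdivlMr // /g => h; nra.
pose S := [set z | exists2 y, 0 < y & z = g y / y].
exists (sup S) => y.
suff : g y <= sup S * y by rewrite /g; lra.
have hS : has_sup S.
  split; first by exists (g 1 / 1); exists 1.
  exists (- g (- 1) / 1) => z [b b0 ->]; exact: key.
have [y0|y0|->] := ltrgtP y 0; last by rewrite mulr0 /g add0r f00; have := f0 m; nra.
- have a0 : 0 < - y by rewrite oppr_gt0.
  have : sup S <= - g (- - y) / - y.
    apply: ge_sup; first by case: hS.
    by move=> z [b b0 ->]; exact: key.
  rewrite opprK ler_pdivlMr // => h; nra.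
- have : g y / y <= sup S by apply: sup_upper_bound => //; exists y.
  by rewrite ler_pdivrMr.
Qed.

Local Open Scope ereal_scope.

Lemma part1 {R : realType} (f : R -> R) :
  measurable_fun setT f ->
  (forall x, 0 <= f x)%R ->
  (forall x, f x = 0 <-> x = 0)%R ->
  forall (d : measure_display) (T : measurableType d) (P : probability T R)
          (X : {RV P >-> R}),
     P.-integrable setT (EFin \o X) ->
     'E_P[fun w => f (X w - fine 'E_P[X])%R] <= c_f f * 'E_P[fun w => f (X w)].
Proof.
move=> mf f0 fz d T P X intX.
rewrite !unlock.
set m := fine _.
have hm : \int[P]_w (X w)%:E = m%:E by rewrite fineK// integrable_fin_num.
set F := \int[P]_w (f (X w))%:E.
have F0 : 0 <= F by apply: integral_ge0 => w _; rewrite lee_fin.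
have mX : measurable_fun setT X by [].
have mfX : measurable_fun setT (fun w => f (X w)) by exact: measurableT_comp.
have mh : measurable_fun setT (fun w => f (X w - m)%R).
  apply: measurableT_comp => //; apply: measurable_funB => //.
have h0 : forall w, (0 <= f (X w - m))%R by [].
have c1 := cf_ge1 f0 fz.
case hc : (c_f f) c1 => [c| |] c1; last by [].
- have c0 : (0 < c)%R by rewrite lee_fin in c1; lra.
  have [l hl] := supline f c m (ltW c0) f0 (proj2 (fz 0%R) erefl) (fun a b => cf_bound f0 fz hc a b m).
  have [Foo|Ffin] := eqVneq F +oo.
    by rewrite Foo gt0_muley ?lte_fin // leey.
  have intfX : P.-integrable setT (EFin \o (fun w => f (X w))).
    apply/integrableP; split; first exact/measurable_EFinP.
    under eq_integral do rewrite gee0_abs ?lee_fin //.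
    by rewrite ltey.
  have intk1 : P.-integrable setT (fun w => (c * f (X w))%:E).
    apply: (eq_integrable measurableT (fun x => c%:E * (f (X x))%:E)) => //.
    exact: integrableZl.
  have intXm : P.-integrable setT (fun w => (X w - m)%:E).
    apply: (eq_integrable measurableT ((EFin \o X) \- (EFin \o cst m))) => //.
    apply: integrableB => //; exact: finite_measure_integrable_cst.
  have intk2 : P.-integrable setT (fun w => (l * (X w - m))%:E).
    apply: (eq_integrable measurableT (fun x => l%:E * (X x - m)%:E)) => //.
    exact: integrableZl.
  have intk : P.-integrable setT (fun w => (c * f (X w))%:E + (l * (X w - m))%:E).
    exact: integrableD.
  have hk : forall w, (f (X w - m) <= c * f (X w) + l * (X w - m))%R.
    by move=> w; have := hl (X w - m)%R; rewrite subrK.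
  have inth : P.-integrable setT (fun w => (f (X w - m))%:E).
    apply: le_integrable intk => //; first exact/measurable_EFinP.
    move=> w _; rewrite -EFinD !abse_EFin lee_fin !ger0_norm //.
    exact: le_trans (hk w).
  apply: (le_trans (le_integral measurableT inth intk _)).
    by move=> w _; rewrite -EFinD lee_fin.
  have I2 : \int[P]_w (l * (X w - m))%:E = 0.
    rewrite (eq_integral (fun w => l%:E * (X w - m)%:E)); last by move=> ? _.
    rewrite integralZl //.
    rewrite (eq_integral (fun w => (X w)%:E - (cst m w)%:E)); last by move=> ? _.
    rewrite integralB_EFin //; last exact: finite_measure_integrable_cst.
    have -> : \int[P]_w (cst m w)%:E = m%:E.
      rewrite (eq_integral (cst m%:E)) // integral_cst //. rewrite -[RHS]mule1; congr (_ * _); exact: probability_setT.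
    by rewrite hm subee // mule0.
  rewrite integralD // I2 adde0.
  rewrite (eq_integral (fun w => c%:E * (f (X w))%:E)); last by move=> ? _.
  by rewrite integralZl.
- move: F0; rewrite le_eqVlt => /orP[/eqP F0'|Fpos]; last first.
    by rewrite gt0_mulye // leey.
  have ae1 : ae_eq P setT (fun w => (f (X w))%:E) (cst 0).
    apply/(@ae_eq_integral_abs _ _ _ P setT measurableT); first exact/measurable_EFinP.
    under eq_integral do rewrite gee0_abs ?lee_fin //.
    by rewrite -/F -F0'.
  have ae2 : ae_eq P setT (EFin \o X) (cst 0).
    move: ae1; apply: filterS => w h Tw.
    by case: (h Tw) => /fz /= ->.
  have I0 : \int[P]_w (X w)%:E = 0.
    rewrite (ae_eq_integral (cst 0) _ measurableT) //; last exact/measurable_EFinP.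
    exact: integral0.
  have m0 : m = 0%R by move: hm; rewrite I0 => -[<-].
  rewrite -F0' mule0.
  under eq_integral do rewrite m0 subr0.
  by rewrite -/F -F0'.
Qed.

Definition Xb {R : realType} (x y : R) : bool -> R := fun b => if b then x else y.
Lemma mXb {R : realType} (x y : R) : measurable_fun setT (Xb x y).
Proof. move=> _ A _; exact: I. Qed.
HB.instance Definition _ (R : realType) (x y : R) :=
  isMeasurableFun.Build _ _ _ _ (Xb x y) (mXb x y).

Lemma intXb {R : realType} (p : R) (x y : R) : (0 <= p <= 1)%R ->
  (bernoulli_prob p).-integrable setT (EFin \o Xb x y).
Proof.
move=> p01; apply/integrableP; split; first exact/measurable_EFinP/mXb.
rewrite integral_bernoulli_prob //= -!EFinM -EFinD; exact: ltry.
Qed.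

Lemma part2 {R : realType} (f : R -> R) :
  (forall x, 0 <= f x)%R ->
  (forall x, f x = 0 <-> x = 0)%R ->
  (forall c : R, c%:E < c_f f ->
     exists (d : measure_display) (T : measurableType d) (P : probability T R)
            (X : {RV P >-> R}),
       P.-integrable setT (EFin \o X) /\
       c%:E * 'E_P[fun w => f (X w)] < 'E_P[fun w => f (X w - fine 'E_P[X])%R]).
Proof.
move=> f0 fz c /ereal_sup_gt [y [a [b [t [a0 [b0 ->]]]]]].
rewrite lte_fin => cr.
have ab0 : (0 < a + b)%R by lra.
pose p := (a / (a + b))%R.
have p01 : (0 <= p <= 1)%R.
  apply/andP; split; first by rewrite /p divr_ge0 // ltW.
  by rewrite /p ler_pdivrMr // mul1r lerDl ltW.
exists _, bool, (bernoulli_prob p), (Xb (b - t) (- a - t)).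
split; first exact: intXb.
rewrite !unlock.
have EX : \int[bernoulli_prob p]_w (Xb (b - t) (- a - t) w)%:E = (- t)%:E.
  rewrite (eq_integral (fun w => (Xb (a + b) 0 w)%:E + (cst (- a - t) w)%:E)); last first.
    by move=> [] _ /=; rewrite -EFinD; congr EFin; lra.
  rewrite integralD //; [|exact: intXb|exact: finite_measure_integrable_cst].
  rewrite integral_bernoulli_prob //=; last by case => /=; rewrite lee_fin // ltW.
  rewrite (eq_integral (cst (- a - t)%:E)) // integral_cst //.
  rewrite [Y in _ + _ * Y](_ : _ = 1); last exact: probability_setT.
  rewrite mule1 -!EFinM -!EFinD; congr EFin; rewrite /p.
  by field; rewrite lt0r_neq0.
rewrite EX /= !integral_bernoulli_prob //=; try by move=> ?; rewrite lee_fin.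
rewrite !opprK !subrK -!EFinM -!EFinD lte_fin.
change (unstable.onem p) with (1 - p)%R.
move: cr; rewrite /cf_ratio.
have D0 := denom_pos a b t f0 fz a0 b0.
rewrite ltr_pdivlMr // => cr.
have eD : (p * f (b - t) + (1 - p) * f (- a - t) = (a * f (b - t) + b * f (- a - t)) / (a + b))%R.
  by rewrite /p; field; rewrite lt0r_neq0.
have eN : (p * f b + (1 - p) * f (- a) = (a * f b + b * f (- a)) / (a + b))%R.
  by rewrite /p; field; rewrite lt0r_neq0.
rewrite eD eN mulrA ltr_pM2r //; by rewrite invr_gt0.
Qed.

Theorem theorem2p1 (R : realType) (f : R -> R) :
  measurable_fun setT f ->
  (forall x, 0 <= f x)%R ->
  (forall x, f x = 0 <-> x = 0)%R ->
  (forall (d : measure_display) (T : measurableType d) (P : probability T R)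
          (X : {RV P >-> R}),
     P.-integrable setT (EFin \o X) ->
     'E_P[fun w => f (X w - fine 'E_P[X])%R] <= c_f f * 'E_P[fun w => f (X w)])
  /\
  (forall c : R, c%:E < c_f f ->
     exists (d : measure_display) (T : measurableType d) (P : probability T R)
            (X : {RV P >-> R}),
       P.-integrable setT (EFin \o X) /\
       c%:E * 'E_P[fun w => f (X w)] < 'E_P[fun w => f (X w - fine 'E_P[X])%R]).
Proof.
move=> mf f0 fz; split; [exact: part1 | exact: part2].
Qed.
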